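(* Let $p$ be a prime, $k\ge0$ an integer and $n\ge1$ an integer, with $n>1$ if $p=2$. Then (1) $P(p,p^k(p^n-1))=p^k(p^n-1)$; (2) $P(p,p^k(p^n+1))=p^k(p^{2n}-1)$.
   Context: For positive integers $m,N$, let $\mathbf{Z}_m$ be the integers modulo $m$ and $T:\mathbf{Z}_m^N\to\mathbf{Z}_m^N$, $T(a_0,\dots,a_{N-1})=(a_0+a_1,a_1+a_2,\dots,a_{N-1}+a_0)$. For $\mathbf{a}\in\mathbf{Z}_m^N$ the cycle length of $(T^j\mathbf{a})_{j\ge0}$ is the smallest positive integer $P$ such that there is $M$ with $T^{j+P}\mathbf{a}=T^j\mathbf{a}$ for all $j\ge M$. $P(m,N)$ denotes the maximum of these cycle lengths over all $\mathbf{a}\in\mathbf{Z}_m^N$. *)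

(* Defs.v *)
From mathcomp Require Import all_boot all_order all_algebra.
Set Implicit Arguments. Unset Strict Implicit. Unset Printing Implicit Defensive.
Import GRing.Theory.
Local Open Scope ring_scope.

(* Vectors in (Z_m)^N, indexed cyclically by 'I_N.  'Z_m is Z/mZ for m >= 2
   (the only case used: m = p prime). *)
Definition vecZ (m N : nat) := {ffun 'I_N -> 'Z_m}.

Definition Tmap (m N : nat) (a : vecZ m N) : vecZ m N :=
  [ffun i => a i + a (ordS i)].

Definition is_eventual_period (m N : nat) (a : vecZ m N) (P : nat) : Prop :=
  exists M : nat, forall j : nat, (M <= j)%N ->
    iter (j + P) (@Tmap m N) a = iter j (@Tmap m N) a.

Definition cycle_length (m N : nat) (a : vecZ m N) (L : nat) : Prop :=
  (0 < L)%N /\ is_eventual_period a L /\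
  forall Q : nat, (0 < Q < L)%N -> ~ is_eventual_period a Q.

Definition Pmax_is (m N L : nat) : Prop :=
  (exists a : vecZ m N, cycle_length a L) /\
  forall (a : vecZ m N) (Q : nat), cycle_length a Q -> (Q <= L)%N.

(* Main.v *)
Require Import Defs.
From mathcomp Require Import all_boot all_order all_algebra.
From mathcomp Require Import zify.
Set Implicit Arguments. Unset Strict Implicit. Unset Printing Implicit Defensive.
Import GRing.Theory.
Local Open Scope ring_scope.

Section PolyPart.
Variable R : fieldType.
Variable p : nat.
Hypothesis charR : p \in [char R].

Local Notation y := ('X + 1 : {poly R}).

Lemma prp : prime p. Proof. exact: pcharf_prime charR. Qed.

Lemma frob s (a b : {poly R}) : (a + b) ^+ (p ^ s) = a ^+ (p ^ s) + b ^+ (p ^ s).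
Proof.
apply: exprDn_pchar.
rewrite pnatX (pnatE _ prp) /=.
by rewrite pchar_poly charR.
Qed.

Lemma frobB s (a : {poly R}) : (a - 1) ^+ (p ^ s) = a ^+ (p ^ s) - 1.
Proof.
rewrite frob exprNn_pchar ?expr1n //.
by rewrite pnatX (pnatE _ prp) /= pchar_poly charR.
Qed.

Lemma y_neq0 : y != 0.
Proof. by rewrite -size_poly_eq0 -polyC1 size_XaddC. Qed.

Lemma yE : y = 'X - (-1)%:P.
Proof. by rewrite polyCN opprK polyC1. Qed.

Lemma size_yexp j : size (y ^+ j) = j.+1.
Proof. by rewrite yE size_exp_XsubC. Qed.

Definition Pd (h c : {poly R}) a := h %| c ^+ a - 1.

Lemma Pd_mul h c a t : Pd h c a -> Pd h c (a * t).
Proof. by rewrite /Pd => H; rewrite exprM subrX1; apply: dvdp_mulr. Qed.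

Lemma Pd_add h c a b : Pd h c a -> Pd h c b -> Pd h c (a + b).
Proof.
rewrite /Pd => Ha Hb.
have -> : c ^+ (a + b) - 1 = c ^+ a * (c ^+ b - 1) + (c ^+ a - 1).
  by rewrite exprD mulrBr mulr1 addrA subrK.
by rewrite dvdp_add // dvdp_mull.
Qed.

Lemma Pd_sub h c a b : coprimep h c -> Pd h c a -> Pd h c (a + b) -> Pd h c b.
Proof.
rewrite /Pd => cop Ha Hab.
have E : c ^+ (a + b) - 1 = c ^+ a * (c ^+ b - 1) + (c ^+ a - 1).
  by rewrite exprD mulrBr mulr1 addrA subrK.
move: Hab; rewrite E dvdp_addl // Gauss_dvdpr //.
exact: coprimep_expr.
Qed.

Lemma Pd_gcd h c a b : coprimep h c -> Pd h c a -> Pd h c b -> Pd h c (gcdn a b).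
Proof.
move=> cop Ha Hb.
case: (posnP a) => [->|a0]; first by rewrite gcd0n.
have [x _ /dvdnP [t Et]] := Bezoutl b a0.
apply: (@Pd_sub h c (x * b)) => //; first by rewrite mulnC; apply: Pd_mul.
by rewrite addnC Et mulnC; apply: Pd_mul.
Qed.

Lemma root_dvd (u v : {poly R}) e : (0 < e)%N -> u ^+ e %| v ^+ e -> u %| v.
Proof.
move=> e0 H.
have [u0 | unz] := eqVneq u 0.
  move: H; rewrite u0 expr0n gtn_eqF // dvd0p expf_eq0 e0 /= => /eqP ->.
  by rewrite dvdpp.
set g := gcdp u v.
have g0 : g != 0 by rewrite gcdp_eq0 negb_and unz.
have cop : coprimep (u %/ g) (v %/ g) by apply: coprimep_div_gcd; rewrite unz.
have Eu : u %/ g * g = u by rewrite divpK // dvdp_gcdl.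
have Ev : v %/ g * g = v by rewrite divpK // dvdp_gcdr.
move: H; rewrite -{1}Eu -{1}Ev !exprMn dvdp_mul2r ?expf_neq0 //.
move=> H1.
have : (u %/ g) ^+ e %| 1.
  by rewrite -(Gauss_dvdpr 1 (coprimep_expr e (coprimep_expl e cop))) mulr1.
rewrite dvdp1 => /eqP H2.
have ug0 : u %/ g != 0.
  by apply/eqP => E0; move: Eu; rewrite E0 mul0r => /esym/eqP; rewrite (negbTE unz).
have su : size (u %/ g) = 1%N.
  apply/eqP; rewrite eqn_leq; apply/andP; split.
    apply: (leq_trans _ (eq_leq H2)); apply: dvdp_leq; first by rewrite -size_poly_eq0 H2.
    by apply: dvdp_exp => //; rewrite dvdpp.
  by rewrite lt0n size_poly_eq0.
have [c Ec] : exists c, u %/ g = c%:P.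
  by exists (u %/ g)`_0; apply: size1_polyC; rewrite su.
have c0 : c != 0.
  by apply/eqP => c0; move: su; rewrite Ec c0 size_poly0.
rewrite -Eu Ec mul_polyC dvdpZl //.
exact: dvdp_gcdr.
Qed.


Lemma derivy : y^`() = 1.
Proof. by rewrite derivD derivX -polyC1 derivC addr0. Qed.

Section H.
Variables (m : nat) (h : {poly R}).
Hypotheses (Hh : h * y = 'X^m - 1) (m1 : (1 < m)%N) (pm : ~~ (p %| m)%N).

Lemma h_neq0 : h != 0.
Proof.
apply/eqP => h0; move: Hh; rewrite h0 mul0r => /esym/eqP.
by rewrite -size_poly_eq0 size_Xn_sub_1 // ltnW.
Qed.

Lemma size_h : size h = m.
Proof.
have := congr1 (fun q : {poly R} => size q) Hh; rewrite /=.
rewrite size_Xn_sub_1 ?(ltnW m1) // size_mul ?y_neq0 ?h_neq0 //.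
by rewrite -polyC1 size_XaddC addn2 /=; case.
Qed.

Lemma h0 : h.[0] = -1.
Proof.
have := congr1 (fun q : {poly R} => q.[0]) Hh; rewrite /= !hornerE expr0n gtn_eqF ?(ltnW m1) //.
by move=> ->; rewrite /= mulr0n sub0r.
Qed.

Lemma hm1 : h.[-1] != 0.
Proof.
have := congr1 (fun q : {poly R} => (deriv q).[-1]) Hh; rewrite /= derivM derivy mulr1.
rewrite derivB derivXn -polyC1 derivC subr0 !hornerE addNr mulr0 add0r hornerMn hornerXn.
move=> ->; rewrite -mulr_natr mulf_neq0 ?expf_neq0 ?oppr_eq0 ?oner_eq0 //.
by rewrite -(dvdn_pcharf charR).
Qed.

Lemma cop_hy : coprimep h y.
Proof. by rewrite yE coprimep_XsubC /root hm1. Qed.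

Lemma cop_hX : coprimep h 'X.
Proof.
have -> : ('X : {poly R}) = 'X - 0%:P by rewrite subr0.
by rewrite coprimep_XsubC rootE h0 oppr_eq0 oner_eq0.
Qed.

Lemma not_dvd1 : ~~ (h %| 1).
Proof. by rewrite dvdp1 size_h neq_ltn m1 orbT. Qed.

Lemma A_part k Q : (0 < Q)%N -> h ^+ (p ^ k) %| y ^+ Q - 1 -> (p ^ k %| Q)%N.
Proof.
move=> Q0 H.
have [r' cpr QE] := pfactor_coprime prp Q0.
move: QE; set s := logn p Q => QE.
case: (leqP k s) => ks; first by rewrite QE dvdn_mull // dvdn_exp2l.
exfalso.
have p0 : (0 < p)%N by rewrite prime_gt0 // prp.
have H1 : h ^+ (p ^ s.+1) %| (y ^+ r' - 1) ^+ (p ^ s).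
  rewrite frobB -exprM -QE.
  apply: dvdp_trans H; apply: dvdp_exp2l; exact: leq_pexp2l.
rewrite expnS exprM in H1.
have ps0 : (0 < p ^ s)%N by rewrite expn_gt0 p0.
have H2 := root_dvd ps0 H1.
have H3 : h ^+ 2 %| y ^+ r' - 1 := dvdp_trans (dvdp_exp2l h (prime_gt1 prp)) H2.
move/dvdpP: H3 => [w Ew].
have H4 : h %| y ^+ r'.-1 *+ r'.
  have := congr1 deriv Ew.
  rewrite derivB -polyC1 derivC subr0 deriv_exp derivy mul1r => ->.
  rewrite derivM expr2 derivM; apply: dvdp_add; first by do 2 apply: dvdp_mull; exact: dvdpp.
  by apply: dvdp_mull; apply: dvdp_add; [apply: dvdp_mull | apply: dvdp_mulr]; exact: dvdpp.
move: H4; rewrite -scaler_nat dvdpZr; last first.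
  by rewrite -(dvdn_pcharf charR) -prime_coprime // prp.
move=> H5.
have : h %| y ^+ r'.-1 * 1 by rewrite mulr1.
by rewrite Gauss_dvdpr ?(negbTE not_dvd1) // coprimep_expr // cop_hy.
Qed.

End H.


Lemma half d n : (d %| n)%N -> (d < n)%N -> (d * 2 <= n)%N.
Proof.
move=> /dvdnP [t ->] lt.
have : (1 < t)%N.
  case: t lt => [|[|t]] //; by rewrite ?mul0n ?mul1n ?ltnn.
by case: t lt => [|[|t]] // _ _; lia.
Qed.

Lemma B1 (r : nat) (h : {poly R}) (Q : nat) : h * y = 'X^r - 1 -> (1 < r)%N -> ~~ (p %| r)%N ->
  y ^+ r.+1 = 'X^(r.+1) + 1 -> (0 < Q)%N -> h %| y ^+ Q - 1 -> (r %| Q)%N.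
Proof.
move=> Hh r1 pr Hf Q0 HQ.
have E1 : y ^+ r - 1 = 'X * h.
  apply: (mulIf y_neq0); rewrite mulrBl mul1r -exprSr Hf -mulrA Hh.
  by rewrite mulrBr mulr1 -exprS opprD addrACA subrr addr0.
have Pr : Pd h y r by rewrite /Pd E1 dvdp_mull // dvdpp.
have cop := cop_hy Hh pr.
have Pj := Pd_gcd cop HQ Pr.
move: Pj; set j := gcdn Q r => Pj.
have j0 : (0 < j)%N by rewrite gcdn_gt0 Q0.
have jr : (j %| r)%N by exact: dvdn_gcdr.
case: (ltngtP j r) => [jlt|rlt|jeq]; last by rewrite -jeq dvdn_gcdl.
  exfalso; have j2 := half jr jlt.
  have sz : size (y ^+ j - 1) = j.+1.
    by rewrite size_addl size_yexp // size_opp size_poly1.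
  have ne : y ^+ j - 1 != 0 by rewrite -size_poly_eq0 sz.
  have := dvdp_leq ne Pj; rewrite sz (size_h Hh r1) => rj.
  have j1 : j = 1%N by lia.
  move: Pj; rewrite /Pd j1 expr1 addrK => HX.
  have : h %| 'X * 1 by rewrite mulr1.
  by rewrite Gauss_dvdpr ?(negbTE (not_dvd1 Hh r1)) // (cop_hX Hh r1).
by move: (dvdn_leq (ltnW r1) jr); rewrite leqNgt rlt.
Qed.


Lemma B2 (r : nat) (h : {poly R}) (Q : nat) : h * y = 'X^(r.+2) - 1 -> (0 < r)%N ->
  ~~ (p %| r.+2)%N ->
  y ^+ r.+1 = 'X^(r.+1) + 1 -> y ^+ (r.+1 * r.+1) = 'X^(r.+1 * r.+1) + 1 ->
  (0 < Q)%N -> h %| y ^+ Q - 1 -> (r.+2 * r %| Q)%N.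
Proof.
move=> Hh r0 pr Hf Hf2 Q0 HQ.
have m1 : (1 < r.+2)%N by [].
have hE : h = 'X * y ^+ r - 1.
  apply: (mulIf y_neq0); rewrite Hh mulrBl mul1r -mulrA -exprSr Hf mulrDr mulr1 -exprS.
  by rewrite opprD addrA addrK.
have cop := cop_hy Hh pr.
have copX := cop_hX Hh m1.
have PqQ : Pd h y (r.+2 * r).
  have E2 : (y ^+ (r.+2 * r) - 1) * y =
            ('X * (\sum_(i < r) ('X^(r.+2)) ^+ i) * h) * y.
    rewrite mulrBl mul1r -exprSr.
    have -> : (r.+2 * r).+1 = (r.+1 * r.+1)%N by rewrite !mulSn !mulnS; lia.
    rewrite Hf2 -mulrA Hh -mulrA [_ * ('X^(r.+2) - 1)]mulrC -subrX1 -exprM.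
    rewrite mulrBr mulr1 -exprS.
    have -> : (r.+2 * r).+1 = (r.+1 * r.+1)%N by rewrite !mulSn !mulnS; lia.
    by rewrite opprD addrACA subrr addr0.
  by rewrite /Pd (mulIf y_neq0 E2) dvdp_mull // dvdpp.
have HXQ : h %| 'X^Q - 1.
  have P1 : Pd h ('X * y ^+ r) 1 by rewrite /Pd expr1 -hE dvdpp.
  have := Pd_mul Q P1; rewrite mul1n /Pd exprMn -exprM.
  have -> : 'X^Q * y ^+ (r * Q) - 1 = 'X^Q * (y ^+ (Q * r) - 1) + ('X^Q - 1).
    by rewrite mulnC mulrBr mulr1 addrA subrK.
  have Hm : h %| 'X^Q * (y ^+ (Q * r) - 1) by apply: dvdp_mull; apply: Pd_mul.
  by rewrite dvdp_addr.
have PX : Pd h 'X r.+2 by rewrite /Pd -Hh dvdp_mulr // dvdpp.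
have PXj := Pd_gcd copX HXQ PX.
move: PXj; set j := gcdn Q r.+2 => PXj.
have j0 : (0 < j)%N by rewrite gcdn_gt0 Q0.
have jr : (j %| r.+2)%N by exact: dvdn_gcdr.
have dQ : (r.+2 %| Q)%N.
  case: (ltngtP j r.+2) => [jlt|rlt|jeq]; last by rewrite -jeq dvdn_gcdl.
    exfalso; have j2 := half jr jlt.
    have sz : size ('X^j - 1 : {poly R}) = j.+1 by rewrite size_Xn_sub_1.
    have ne : ('X^j - 1 : {poly R}) != 0 by rewrite -size_poly_eq0 sz.
    have := dvdp_leq ne PXj; rewrite sz (size_h Hh m1) => rj.
    lia.
  by move: (dvdn_leq (ltn0Sn _) jr); rewrite leqNgt rlt.
move/dvdnP: dQ => [t Qt].
have t0 : (0 < t)%N by move: Q0; rewrite Qt muln_gt0 => /andP[].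
have copc : coprimep h (y ^+ r.+2) by rewrite coprimep_expr.
have Pt : Pd h (y ^+ r.+2) t by rewrite /Pd -exprM mulnC -Qt.
have Pr : Pd h (y ^+ r.+2) r by rewrite /Pd -exprM.
have Pj := Pd_gcd copc Pt Pr.
move: Pj; set i := gcdn t r => Pj.
have i0 : (0 < i)%N by rewrite gcdn_gt0 t0.
have ir : (i %| r)%N by exact: dvdn_gcdr.
have H1 : h %| 'X * (y ^+ r.+2) - y ^+ 2.
  have -> : 'X * (y ^+ r.+2) - y ^+ 2 = y ^+ 2 * h.
    by rewrite hE mulrBr mulr1 [y ^+ 2 * _]mulrC -mulrA -exprD addn2.
  by rewrite dvdp_mull // dvdpp.
have H2 : h %| ('X * (y ^+ r.+2)) ^+ i - (y ^+ 2) ^+ i by rewrite subrXX dvdp_mulr.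
have H3 : h %| 'X^i - y ^+ (2 * i).
  move: H2; rewrite exprMn -[(y ^+ 2) ^+ i]exprM.
  have -> : 'X^i * (y ^+ r.+2) ^+ i - y ^+ (2 * i) = 'X^i * ((y ^+ r.+2) ^+ i - 1) + ('X^i - y ^+ (2 * i)).
    by rewrite mulrBr mulr1 addrA subrK.
  have Hm : h %| 'X^i * ((y ^+ r.+2) ^+ i - 1) by apply: dvdp_mull.
  by rewrite dvdp_addr.
case: (ltngtP i r) => [ilt|rlt|ieq].
- exfalso; have i2 := half ir ilt.
  have sz : size ('X^i - y ^+ (2 * i)) = (2 * i).+1.
    by rewrite -opprB size_opp size_addl size_yexp ?size_opp ?size_polyXn // ltnS mul2n -addnn -{1}(addn0 i) ltn_add2l.
  have ne : 'X^i - y ^+ (2 * i) != 0 by rewrite -size_poly_eq0 sz.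
  have := dvdp_leq ne H3; rewrite sz (size_h Hh m1) => rj.
  by move: rj i2; generalize i r; clear; lia.
- by move: (dvdn_leq r0 ir); rewrite leqNgt rlt.
- have : (r %| t)%N by rewrite -ieq dvdn_gcdl.
  by rewrite Qt mulnC dvdn_pmul2r.
Qed.

End PolyPart.
Set Implicit Arguments. Unset Strict Implicit. Unset Printing Implicit Defensive.
Import GRing.Theory.
Local Open Scope ring_scope.

Lemma ar1 N a b : (0 < N)%N -> (a < N)%N -> (b < N)%N -> (N %| a + (N - b) %% N)%N = (a == b).
Proof.
move=> N0 aN bN; apply/idP/eqP.
  case: (posnP b) => [b0|b0].
    rewrite b0 subn0 modnn addn0 /dvdn modn_small // => /eqP; lia.
  rewrite (modn_small (_ : N - b < N)%N); last by lia.
  case: (leqP b a) => ab.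
    have -> : (a + (N - b) = N + (a - b))%N by lia.
    rewrite /dvdn modnDl modn_small; [move/eqP; lia | lia].
  rewrite /dvdn modn_small; [move/eqP; lia | lia].
move=> ->; apply/dvdnP.
case: (posnP b) => [b0|b0].
  by exists 0%N; rewrite b0 subn0 modnn.
exists 1%N; rewrite modn_small; lia.
Qed.

Lemma ar2 N i : (0 < N)%N -> (i < N)%N -> ((N - (N - i) %% N) %% N)%N = i.
Proof.
move=> N0 iN; case: (posnP i) => [->|i0]; first by rewrite subn0 modnn subn0 modnn.
rewrite (modn_small (_ : N - i < N)%N); last by lia.
rewrite modn_small; lia.
Qed.

Section Vec.
Variable p : nat.
Local Notation F := ('F_p).
Local Notation y := ('X + 1 : {poly F}).
Variable N : nat.
Hypothesis N0 : (0 < N)%N.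

Definition phi (f : {poly F}) (i : nat) : F := \sum_(j < size f) f`_j *+ (N %| j + i)%N.

Lemma phi_ext (f : {poly F}) (i n : nat) : (size f <= n)%N -> phi f i = \sum_(j < n) f`_j *+ (N %| j + i)%N.
Proof.
move=> Hn; rewrite /phi -!(big_mkord xpredT (fun j => f`_j *+ (N %| j + i)%N)).
rewrite (big_cat_nat (leq0n (size f)) Hn) /= [X in _ + X]big1_seq ?addr0 // => j /andP[_].
by rewrite mem_index_iota => /andP[Hj _]; rewrite nth_default // mul0rn.
Qed.

Lemma phiD (f g : {poly F}) i : phi (f + g) i = phi f i + phi g i.
Proof.
set n := maxn (size f) (size g).
rewrite !(phi_ext _ (n := n)) ?leq_maxl ?leq_maxr ?(leq_trans (size_add _ _)) //.
by rewrite -big_split; apply: eq_bigr => j _; rewrite coefD mulrnDl.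
Qed.

Lemma phiN (f : {poly F}) i : phi (- f) i = - phi f i.
Proof. by rewrite /phi size_opp -sumrN; apply: eq_bigr => j _; rewrite coefN mulNrn. Qed.

Lemma phiB (f g : {poly F}) i : phi (f - g) i = phi f i - phi g i.
Proof. by rewrite phiD phiN. Qed.

Lemma phiX (f : {poly F}) i : phi ('X * f) i = phi f i.+1.
Proof.
rewrite (phi_ext _ (n := (size f).+1)); last first.
  by apply: leq_trans (size_mul_leq _ _) _; rewrite size_polyX.
rewrite big_ord_recl coefXM /= mul0rn add0r /phi; apply: eq_bigr => j _.
by rewrite coefXM /= addSnnS.
Qed.

Lemma phiXn n (f : {poly F}) i : phi ('X^n * f) i = phi f (i + n).
Proof.
elim: n i => [|n IH] i; first by rewrite expr0 mul1r addn0.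
by rewrite exprS -mulrA phiX IH addSnnS.
Qed.

Lemma phi_mod (f : {poly F}) i : phi f (i %% N) = phi f i.
Proof. by rewrite /phi; apply: eq_bigr => j _; rewrite /dvdn modnDmr. Qed.

Lemma phi_addN (f : {poly F}) i : phi f (i + N) = phi f i.
Proof. by rewrite -phi_mod modnDr phi_mod. Qed.

Lemma phiG (w : {poly F}) i : phi (('X^N - 1) * w) i = 0.
Proof. by rewrite mulrBl mul1r phiB phiXn phi_addN subrr. Qed.

Lemma phi_small (f : {poly F}) : (size f <= N)%N -> (forall i, (i < N)%N -> phi f i = 0) -> f = 0.
Proof.
move=> Hs H; apply/polyP => j; rewrite coef0.
case: (ltnP j N) => jN; last by rewrite nth_default // (leq_trans Hs jN).
have := H ((N - j) %% N)%N (ltn_pmod _ N0).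
rewrite (phi_ext _ Hs) (bigD1 (Ordinal jN)) //= big1 ?addr0.
  by rewrite ar1 // ?ltn_pmod // eqxx mulr1n.
move=> j' /negPf nj; rewrite ar1 // ?ltn_pmod //.
by have -> : (j' == j :> nat) = false by apply: contraFF nj => /eqP E; apply/eqP/val_inj.
Qed.

Lemma phi_eq0 (f : {poly F}) : (forall i, (i < N)%N -> phi f i = 0) -> 'X^N - 1 %| f.
Proof.
move=> H; apply/modp_eq0P; apply: phi_small.
  by rewrite -ltnS -(size_Xn_sub_1 F N0) ltn_modp -size_poly_eq0 size_Xn_sub_1.
move=> i Hi; have := H i Hi; rewrite {1}(divp_eq f ('X^N - 1)) phiD mulrC phiG add0r.
by [].
Qed.

Definition Phi (f : {poly F}) : vecZ (pdiv p) N := [ffun i : 'I_N => phi f i].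

Lemma TPhi (f : {poly F}) : Tmap (Phi f) = Phi (y * f).
Proof.
apply/ffunP => i; rewrite /Tmap !ffunE /= mulrDl mul1r phiD phiX phi_mod.
by rewrite addrC.
Qed.

Lemma iterPhi j (f : {poly F}) : iter j (@Tmap (pdiv p) N) (Phi f) = Phi (y ^+ j * f).
Proof.
elim: j => [|j IH]; first by rewrite expr0 mul1r.
by rewrite iterS IH TPhi exprS mulrA.
Qed.

Lemma Phi_eq (f g : {poly F}) : Phi f = Phi g -> 'X^N - 1 %| f - g.
Proof.
move=> E; apply: phi_eq0 => i Hi; rewrite phiB.
by have := congr1 (fun a : vecZ (pdiv p) N => a (Ordinal Hi)) E; rewrite /Phi !ffunE /= => ->; rewrite subrr.
Qed.

Lemma Phi_eqG (f g : {poly F}) : 'X^N - 1 %| f - g -> Phi f = Phi g.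
Proof.
move/dvdpP => [w Ew]; apply/ffunP => i; rewrite !ffunE; apply/eqP.
by rewrite -subr_eq0 -phiB Ew mulrC phiG.
Qed.

Lemma Phi_surj (a : vecZ (pdiv p) N) : exists f, Phi f = a.
Proof.
exists (\poly_(j < N) a (Ordinal (ltn_pmod (N - j) N0))).
apply/ffunP => i; rewrite ffunE (phi_ext _ (size_poly _ _)).
have iN := ltn_ord i.
rewrite (bigD1 (Ordinal (ltn_pmod (N - i) N0))) //= big1 ?addr0.
  rewrite coef_poly ltn_pmod // (_ : (N %| _ + i)%N = true) ?mulr1n; last first.
    by rewrite /dvdn modnDml subnK ?modnn // ltnW.
  by congr (a _); apply: val_inj => /=; rewrite ar2.
move=> j /negPf nj.
have -> : (N %| j + i)%N = (N %| j + (N - (N - i) %% N) %% N)%N by rewrite ar2.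
rewrite ar1 ?ltn_pmod //.
have -> : (j == (N - i) %% N :> nat)%N = false; last by rewrite mulr0n.
by apply: contraFF nj => /eqP E; apply/eqP/val_inj.
Qed.


Lemma Pmax_from (L e : nat) (h : {poly F}) : (0 < L)%N ->
   ('X^N - 1 %| y ^+ (e + L) - y ^+ e) -> (h %| 'X^N - 1) -> coprimep h y ->
   (forall Q, (0 < Q)%N -> h %| y ^+ Q - 1 -> (L <= Q)%N) ->
   Pmax_is (pdiv p) N L.
Proof.
move=> L0 HL hG cop Hmin.
have evp : forall a : vecZ (pdiv p) N, is_eventual_period a L.
  move=> a; have [f <-] := Phi_surj a; exists e => j ej.
  rewrite !iterPhi; apply: Phi_eqG.
  have -> : y ^+ (j + L) * f - y ^+ j * f = (y ^+ (j - e) * f) * (y ^+ (e + L) - y ^+ e).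
    rewrite -mulrBl mulrAC; congr (_ * _).
    by rewrite mulrBr -!exprD addnA !subnK.
  exact: dvdp_mull.
split.
  exists (Phi 1); split; first exact: L0.
  split; first exact: evp.
  move=> Q /andP[Q0 QL] [M HM]; have := HM M (leqnn M); rewrite !iterPhi => /Phi_eq.
  rewrite !mulr1 exprD -{2}(mulr1 (y ^+ M)) -mulrBr => H.
  have : h %| y ^+ M * (y ^+ Q - 1) by exact: dvdp_trans hG H.
  rewrite Gauss_dvdpr ?coprimep_expr // => /(Hmin _ Q0).
  by rewrite leqNgt QL.
move=> a Q [Q0 [_ Hnot]]; rewrite leqNgt; apply/negP => LQ.
by apply: (Hnot L); [rewrite L0 LQ | exact: evp].
Qed.

End Vec.
Set Implicit Arguments. Unset Strict Implicit. Unset Printing Implicit Defensive.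
Import GRing.Theory.
Local Open Scope ring_scope.

Lemma sign_m p m : prime p -> (p = 2 \/ ~~ odd m) -> ((-1) ^+ m : 'F_p) = 1.
Proof.
move=> pr [p2 | em]; last by rewrite -signr_odd (negbTE em) expr0.
have E : (-1 : 'F_p) = 1 by subst p; apply/eqP.
by rewrite E expr1n.
Qed.

Lemma h_exists p m : prime p -> ((-1) ^+ m : 'F_p) = 1 ->
  exists h : {poly 'F_p}, h * ('X + 1) = 'X^m - 1.
Proof.
move=> pr Hm; exists (('X^m - 1) %/ ('X + 1)); apply: divpK.
have -> : ('X + 1 : {poly 'F_p}) = 'X - (-1)%:P by rewrite polyCN opprK polyC1.
by rewrite dvdp_XsubCl rootE !hornerE Hm subrr.
Qed.

Lemma frobXp p s : prime p -> ('X + 1 : {poly 'F_p}) ^+ (p ^ s) = 'X^(p ^ s) + 1.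
Proof. by move=> pr; rewrite (frob (pchar_Fp pr)) expr1n. Qed.

Lemma diffX (R : fieldType) (a b : nat) :
  ('X^(a + b) + 1) - ('X^a + 1) = 'X^a * ('X^b - 1) :> {poly R}.
Proof. by rewrite opprD addrACA subrr addr0 mulrBr mulr1 exprD. Qed.

Lemma hG_lem p k m (h : {poly 'F_p}) : prime p -> h * ('X + 1) = 'X^m - 1 ->
  h ^+ (p ^ k) %| 'X^(p ^ k * m) - 1.
Proof.
move=> pr Hh.
by rewrite mulnC exprM -(frobB (pchar_Fp pr)) -Hh exprMn dvdp_mulr // dvdpp.
Qed.

Lemma ndvd_succ p r : prime p -> (p %| r.+1)%N -> ~~ (p %| r)%N.
Proof.
move=> pr H; apply/negP => Hr; move: H; rewrite -addn1 dvdn_addr // dvdn1.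
by apply/negP; rewrite neq_ltn prime_gt1 ?orbT.
Qed.

Lemma main_thm (p k n : nat) :
  prime p -> (1 <= n)%N -> (p = 2 -> (1 < n)%N) ->
  Pmax_is p (p ^ k * (p ^ n - 1)) (p ^ k * (p ^ n - 1)) /\
  Pmax_is p (p ^ k * (p ^ n + 1)) (p ^ k * (p ^ (2 * n) - 1)).
Proof.
move=> pr n1 p2n.
have charF := pchar_Fp pr.
have p1 := prime_gt1 pr.
have p0 : (0 < p)%N by apply: ltnW.
have q3 : (3 <= p ^ n)%N.
  case: (even_prime pr) => [p2|op].
    have := p2n p2; rewrite p2; case: n {n1 p2n} => [|[|n']] // _.
    by rewrite !expnS; have := expn_gt0 2 n'; lia.
  have p3 : (3 <= p)%N by case: p pr op p1 {charF p2n p0} => [|[|[|p']]].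
  by apply: leq_trans p3 _; rewrite -{1}(expn1 p) leq_pexp2l.
have qodd : p = 2 \/ odd (p ^ n).
  by case: (even_prime pr) => [->|op]; [left | right; rewrite oddX op orbT].
have pq : (p %| p ^ n)%N by rewrite dvdn_exp.
have [r qE] : exists r, (p ^ n = r.+1)%N by exists (p ^ n).-1; rewrite prednK // ltnW // ltnW.
have Fq : ('X + 1 : {poly 'F_p}) ^+ r.+1 = 'X^(r.+1) + 1 by rewrite -qE frobXp.
have r2 : (1 < r)%N by lia.
have pk0 : (0 < p ^ k)%N by rewrite expn_gt0 p0.
split.
- rewrite -{1}(pdiv_id pr) qE subn1 /=.
  have pr_m : ~~ (p %| r)%N by apply: ndvd_succ => //; rewrite -qE.
  have [h Hh] : exists h : {poly 'F_p}, h * ('X + 1) = 'X^r - 1.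
    apply: h_exists => //; apply: sign_m => //.
    by case: qodd => [->|]; [left | rewrite qE => H; right; move: H; rewrite /=; by case: (odd r)].
  apply: (fun N0 => @Pmax_from p _ N0 _ (p ^ k) (h ^+ (p ^ k))).
  + by rewrite muln_gt0 pk0 ltnW.
  + by rewrite muln_gt0 pk0 ltnW.
  + have -> : (p ^ k + p ^ k * r = p ^ (k + n))%N by rewrite expnD qE mulnS.
    rewrite !frobXp // expnD qE mulnS diffX dvdp_mull // dvdpp.
  + exact: hG_lem.
  + by rewrite coprimep_expl // (cop_hy charF Hh).
  + move=> Q Q0 HQ.
    have A := A_part charF Hh r2 pr_m Q0 HQ.
    have hd : h %| ('X + 1) ^+ Q - 1.
      by apply: dvdp_trans HQ; apply: dvdp_exp => //; rewrite dvdpp.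
    have B := B1 charF Hh r2 pr_m Fq Q0 hd.
    apply: dvdn_leq Q0 _; rewrite Gauss_dvd ?A ?B //.
    by apply: coprimeXl; rewrite prime_coprime.
- rewrite -{1}(pdiv_id pr) qE addn1.
  have E2 : (p ^ (2 * n) - 1 = r.+2 * r)%N.
    by rewrite mulnC expnM qE; nia.
  rewrite E2.
  have pr_m : ~~ (p %| r.+2)%N.
    by apply/negP => H; move: (ndvd_succ pr H); rewrite -qE pq.
  have pr_r : ~~ (p %| r)%N by apply: ndvd_succ => //; rewrite -qE.
  have [h Hh] : exists h : {poly 'F_p}, h * ('X + 1) = 'X^(r.+2) - 1.
    apply: h_exists => //; apply: sign_m => //.
    by case: qodd => [->|]; [left | rewrite qE => H; right; move: H; rewrite /=; by case: (odd r)].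
  have Fq2 : ('X + 1 : {poly 'F_p}) ^+ (r.+1 * r.+1) = 'X^(r.+1 * r.+1) + 1.
    by rewrite -qE -expnD frobXp.
  apply: (fun N0 => @Pmax_from p _ N0 _ (p ^ k) (h ^+ (p ^ k))).
  + by rewrite muln_gt0 pk0.
  + by rewrite !muln_gt0 pk0 /= ltnW.
  + have -> : (p ^ k + p ^ k * (r.+2 * r) = p ^ (k + (n + n)))%N.
      by rewrite !expnD qE; nia.
    rewrite !frobXp //.
    have -> : (p ^ (k + (n + n)) = p ^ k + (p ^ k * r.+2) * r)%N.
      by rewrite !expnD qE; nia.
    by rewrite diffX dvdp_mull // [X in _ %| X - 1]exprM [X in _ %| X]subrX1 dvdp_mulr // dvdpp.
  + exact: hG_lem.
  + by rewrite coprimep_expl // (cop_hy charF Hh).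
  + move=> Q Q0 HQ.
    have A := A_part charF Hh (isT : (1 < r.+2)%N) pr_m Q0 HQ.
    have hd : h %| ('X + 1) ^+ Q - 1.
      by apply: dvdp_trans HQ; apply: dvdp_exp => //; rewrite dvdpp.
    have B := B2 charF Hh (ltnW r2) pr_m Fq Fq2 Q0 hd.
    apply: dvdn_leq Q0 _; rewrite Gauss_dvd ?A ?B //.
    by apply: coprimeXl; rewrite coprimeMr !prime_coprime // pr_m pr_r.
Qed.

Local Close Scope ring_scope.

Theorem proposition7p4 (p k n : nat) :
  prime p -> (1 <= n)%N -> (p = 2 -> (1 < n)%N) ->
  Pmax_is p (p ^ k * (p ^ n - 1)) (p ^ k * (p ^ n - 1)) /\
  Pmax_is p (p ^ k * (p ^ n + 1)) (p ^ k * (p ^ (2 * n) - 1)).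
Proof. exact: main_thm. Qed.
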